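(* Let $n\ge 1$ and let $h\in\mathrm{PR}\cap\mathscr{A}_0$. Then for any $p_1,\ldots,p_n\in\mathcal{P}_h$ and any $L\in\mathcal{L}$, the feedback interconnection $$y_i(s)=p_i(s)\big(e_i(s)-u_i(s)\big),\ i=1,\dots,n,\qquad u(s)=\tfrac{1}{s}L\,y(s)$$ is stable, i.e. $$\begin{bmatrix}P(s)\\ I\end{bmatrix}\Big(I+\tfrac{1}{s}L P(s)\Big)^{-1}\begin{bmatrix}\tfrac{1}{s}L & I\end{bmatrix}\in\mathscr{H}_\infty^{2n\times 2n},\qquad P(s)=\operatorname{diag}(p_1(s),\dots,p_n(s)).$$
   Context: $\mathscr{H}_\infty$ denotes the space of (scalar or matrix) functions analytic and bounded on the open right half plane $\mathbb{C}_+=\{s:\mathrm{Re}(s)>0\}$, with norm $\|g\|_\infty=\sup_{s\in\mathbb{C}_+}|g(s)|$. $\mathscr{A}_0$ denotes the subset of $\mathscr{H}_\infty$ consisting of functions that extend continuously to the extended imaginary axis $j\mathbb{R}\cup\{\infty\}$. A (not necessarily proper or rational) transfer function $g$ is positive real ($g\in\mathrm{PR}$) if (i) $g$ is analytic in $\mathrm{Re}(s)>0$; (ii) $g(s)$ is real for all positive real $s$; (iii) $\mathrm{Re}(g(s))\ge 0$ for all $\mathrm{Re}(s)>0$. $g$ is extended strictly positive real ($g\in\mathrm{ESPR}$) if in addition $g\in\mathscr{A}_0$ and there exists $\epsilon>0$ such that $g(s)-\epsilon$ is PR. For $h$ given, $\mathcal{P}_h:=\{p\in\mathscr{H}_\infty:\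 p(0)\neq 0,\ h(s)(1+p(s)/s)\in\mathrm{ESPR}\}$ (here $p(0)$ denotes the boundary value at $s=0$). $\mathcal{L}:=\{L\in\mathbb{R}^{n\times n}: L=L^T,\ 0\preceq L\preceq I\}$. *)

(* Defs.v *)
From Stdlib Require Import Reals.
Open Scope R_scope.

Definition Cx : Type := (R * R)%type.
Definition Re (z : Cx) : R := fst z.
Definition Im (z : Cx) : R := snd z.
Definition RtoC (x : R) : Cx := (x, 0).
Definition C0 : Cx := (0, 0).
Definition C1 : Cx := (1, 0).
Definition Cadd (a b : Cx) : Cx := (Re a + Re b, Im a + Im b).
Definition Copp (a : Cx) : Cx := (- Re a, - Im a).
Definition Csub (a b : Cx) : Cx := Cadd a (Copp b).
Definition Cmul (a b : Cx) : Cx :=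
  (Re a * Re b - Im a * Im b, Re a * Im b + Im a * Re b).
Definition Cinv (a : Cx) : Cx :=
  (Re a / (Re a ^ 2 + Im a ^ 2), - Im a / (Re a ^ 2 + Im a ^ 2)).
Definition Cdiv (a b : Cx) : Cx := Cmul a (Cinv b).
Definition Cabs (a : Cx) : R := sqrt (Re a ^ 2 + Im a ^ 2).

Fixpoint Csum (n : nat) (f : nat -> Cx) : Cx :=
  match n with
  | O => C0
  | S m => Cadd (Csum m f) (f m)
  end.

Definition Cdelta (i j : nat) : Cx := if Nat.eqb i j then C1 else C0.

Definition RHP (s : Cx) : Prop := 0 < Re s.

Definition analytic_RHP (f : Cx -> Cx) : Prop :=
  forall z, RHP z -> exists l : Cx,
    forall eps, 0 < eps -> exists delta, 0 < delta /\
      forall hh : Cx, 0 < Cabs hh -> Cabs hh < delta ->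
        Cabs (Csub (Cdiv (Csub (f (Cadd z hh)) (f z)) hh) l) < eps.

Definition Hinf (f : Cx -> Cx) : Prop :=
  analytic_RHP f /\ exists M : R, forall s, RHP s -> Cabs (f s) <= M.

Definition lim_RHP_at (f : Cx -> Cx) (z0 l : Cx) : Prop :=
  forall eps, 0 < eps -> exists delta, 0 < delta /\
    forall s, RHP s -> Cabs (Csub s z0) < delta -> Cabs (Csub (f s) l) < eps.

Definition lim_RHP_inf (f : Cx -> Cx) (l : Cx) : Prop :=
  forall eps, 0 < eps -> exists M : R,
    forall s, RHP s -> M < Cabs s -> Cabs (Csub (f s) l) < eps.

(** A_0: H_infinity functions extending continuously to jR ∪ {∞}
    (g w is the boundary value at j w, ginf the value at infinity) *)
Definition A0 (f : Cx -> Cx) : Prop :=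
  Hinf f /\
  exists (g : R -> Cx) (ginf : Cx),
    (forall w : R, lim_RHP_at f (0, w) (g w)) /\ lim_RHP_inf f ginf.

Definition PR (g : Cx -> Cx) : Prop :=
  analytic_RHP g /\
  (forall x : R, 0 < x -> Im (g (RtoC x)) = 0) /\
  (forall s, RHP s -> 0 <= Re (g s)).

Definition ESPR (g : Cx -> Cx) : Prop :=
  PR g /\ A0 g /\
  exists eps : R, 0 < eps /\ PR (fun s => Csub (g s) (RtoC eps)).

Definition boundary_value_at0_nonzero (p : Cx -> Cx) : Prop :=
  exists c : Cx, c <> C0 /\ lim_RHP_at p C0 c.

Definition Pclass (h p : Cx -> Cx) : Prop :=
  Hinf p /\ boundary_value_at0_nonzero p /\
  ESPR (fun s => Cmul (h s) (Cadd C1 (Cdiv (p s) s))).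

Fixpoint Rsum (n : nat) (f : nat -> R) : R :=
  match n with
  | O => 0
  | S m => Rsum m f + f m
  end.

Definition quad (n : nat) (L : nat -> nat -> R) (x : nat -> R) : R :=
  Rsum n (fun i => Rsum n (fun j => x i * L i j * x j)).

Definition Lclass (n : nat) (L : nat -> nat -> R) : Prop :=
  (forall i j, (i < n)%nat -> (j < n)%nat -> L i j = L j i) /\
  (forall x : nat -> R, 0 <= quad n L x) /\
  (forall x : nat -> R, quad n L x <= Rsum n (fun i => x i * x i)).

(** complex n×n matrices are functions nat -> nat -> Cx, entries with
    indices < n being significant *)

(** M(s) = I + (1/s) L P(s), with P(s) = diag(p_1(s),...,p_n(s)),
    0-indexed: p i is p_{i+1} *)
Definition loopM (n : nat) (p : nat -> Cx -> Cx) (L : nat -> nat -> R) (s : Cx)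
  : nat -> nat -> Cx :=
  fun i j => Cadd (Cdelta i j) (Cdiv (Cmul (RtoC (L i j)) (p j s)) s).

Definition is_inverse (n : nat) (M X : nat -> nat -> Cx) : Prop :=
  forall i j, (i < n)%nat -> (j < n)%nat ->
    Csum n (fun k => Cmul (M i k) (X k j)) = Cdelta i j /\
    Csum n (fun k => Cmul (X i k) (M k j)) = Cdelta i j.

(** [P; I] : 2n × n *)
Definition leftB (n : nat) (p : nat -> Cx -> Cx) (s : Cx) : nat -> nat -> Cx :=
  fun i k => if Nat.ltb i n then Cmul (Cdelta i k) (p i s) else Cdelta (i - n) k.

(** [ (1/s) L , I ] : n × 2n *)
Definition rightB (n : nat) (L : nat -> nat -> R) (s : Cx) : nat -> nat -> Cx :=
  fun k j => if Nat.ltb j n then Cdiv (RtoC (L k j)) s else Cdelta k (j - n).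

(** entry (i,j) of [P;I] X [(1/s)L, I] *)
Definition closed_loop (n : nat) (p : nat -> Cx -> Cx) (L : nat -> nat -> R)
  (X : nat -> nat -> Cx) (s : Cx) (i j : nat) : Cx :=
  Csum n (fun k => Csum n (fun l =>
    Cmul (Cmul (leftB n p s i k) (X k l)) (rightB n L s l j))).

Definition stable (n : nat) (p : nat -> Cx -> Cx) (L : nat -> nat -> R) : Prop :=
  exists Xinv : Cx -> nat -> nat -> Cx,
    (forall s, RHP s -> is_inverse n (loopM n p L s) (Xinv s)) /\
    (forall i j, (i < 2 * n)%nat -> (j < 2 * n)%nat ->
       Hinf (fun s => closed_loop n p L (Xinv s) s i j)).

(* Main.v *)
Require Import Defs.
From Stdlib Require Import Reals Lra Lia Psatz.
From Stdlib Require Import IndefiniteDescription.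

Module LA.
From mathcomp Require Import all_boot all_algebra.
From mathcomp Require Import complex Rstruct.
Import GRing.Theory Num.Theory.
Local Open Scope ring_scope.

Definition toC (z : Cx) : Rdefinitions.R[i] := Complex (fst z) (snd z).
Definition fromC (c : Rdefinitions.R[i]) : Cx := (complex.Re c, complex.Im c).

Lemma fromCK c : toC (fromC c) = c. Proof. by case: c. Qed.
Lemma toCK z : fromC (toC z) = z. Proof. by case: z. Qed.
Lemma toC_inj x y : toC x = toC y -> x = y.
Proof. by move=> H; rewrite -(toCK x) H toCK. Qed.

Lemma toC_add x y : toC (Cadd x y) = toC x + toC y.
Proof. by case: x => a b; case: y => c d. Qed.
Lemma toC_mul x y : toC (Cmul x y) = toC x * toC y.
Proof. by case: x => a b; case: y => c d. Qed.
Lemma toC0 : toC Defs.C0 = 0. Proof. by []. Qed.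
Lemma toC1 : toC Defs.C1 = 1. Proof. by []. Qed.

Lemma toC_sum n f : toC (Csum n f) = \sum_(k < n) toC (f k).
Proof.
elim: n => [|n IH] /=; first by rewrite big_ord0.
by rewrite big_ord_recr /= toC_add IH.
Qed.

Lemma toC_delta i j : toC (Cdelta i j) = (i == j)%:R.
Proof. rewrite /Cdelta. case: (PeanoNat.Nat.eqb_spec i j) => [->|/eqP H].
 by rewrite eqxx. by rewrite (negbTE H). Qed.

Lemma inv_exists n (M : nat -> nat -> Cx) :
  (forall v : nat -> Cx,
     (forall i, (i < n.+1)%coq_nat -> Csum n.+1 (fun j => Cmul (M i j) (v j)) = Defs.C0) ->
     forall i, (i < n.+1)%coq_nat -> v i = Defs.C0) ->
  exists X, is_inverse n.+1 M X.
Proof.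
move=> Hinj.
pose A := \matrix_(i < n.+1, j < n.+1) toC (M i j).
have HA : A \in unitmx.
  rewrite unitmxE unitfE -det_tr.
  apply/negP => /det0P [v vn0 vA].
  pose vv := fun k : nat => fromC (v ord0 (inord k)).
  have Hv : forall i, (i < n.+1)%coq_nat -> vv i = Defs.C0.
    apply: Hinj => i /ltP Hi. apply: toC_inj. rewrite toC_sum toC0.
    have := congr1 (fun m : 'M_(1, n.+1) => m ord0 (inord i)) vA. rewrite !mxE => H.
    apply: etrans H. apply: eq_bigr => k _. rewrite !mxE toC_mul fromCK mulrC.
    by rewrite inord_val inordK.
  move/negP: vn0; apply; apply/eqP/rowP => k. rewrite mxE.
  have := Hv k (ltP (ltn_ord k)). rewrite /vv inord_val => H.
  by rewrite -(fromCK (v ord0 k)) H.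
pose B := invmx A.
exists (fun i j => fromC (B (inord i) (inord j))).
move=> i j /ltP Hi /ltP Hj.
have E : (inord i == inord j :> 'I_n.+1) = (i == j).
  apply/eqP/eqP => [H|->] //. have := congr1 val H. by rewrite /= !inordK.
split; apply: toC_inj; rewrite toC_sum toC_delta.
- have := congr1 (fun m : 'M_(n.+1) => m (inord i) (inord j)) (mulmxV HA).
  rewrite !mxE E => H.
  apply: etrans H. apply: eq_bigr => k _. by rewrite toC_mul fromCK !mxE inordK // inord_val.
- have := congr1 (fun m : 'M_(n.+1) => m (inord i) (inord j)) (mulVmx HA).
  rewrite !mxE E => H.
  apply: etrans H. apply: eq_bigr => k _. by rewrite toC_mul fromCK !mxE inordK // inord_val.
Qed.
End LA.

Set Bullet Behavior "Strict Subproofs".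
From Coquelicot Require Import Coquelicot.
Open Scope R_scope.
Close Scope C_scope.
Open Scope R_scope.

Lemma CaddE x y : Cadd x y = Cplus x y. Proof. reflexivity. Qed.
Lemma CmulE x y : Cmul x y = Cmult x y. Proof. reflexivity. Qed.
Lemma CsubE x y : Csub x y = Cminus x y. Proof. reflexivity. Qed.
Lemma CoppE x : Defs.Copp x = Copp x. Proof. reflexivity. Qed.
Lemma CdivE x y : Defs.Cdiv x y = Cdiv x y. Proof. reflexivity. Qed.
Lemma CinvE x : Defs.Cinv x = Cinv x. Proof. reflexivity. Qed.
Lemma CabsE x : Cabs x = Cmod x. Proof. reflexivity. Qed.
Lemma RtoCE x : Defs.RtoC x = RtoC x. Proof. reflexivity. Qed.
Lemma C0E : Defs.C0 = RtoC 0. Proof. reflexivity. Qed.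
Lemma C1E : Defs.C1 = RtoC 1. Proof. reflexivity. Qed.
Lemma ReE z : Defs.Re z = fst z. Proof. reflexivity. Qed.
Lemma ImE z : Defs.Im z = snd z. Proof. reflexivity. Qed.

Ltac toC := try change Cadd with Cplus in *; try change Cmul with Cmult in *;
  try change Csub with Cminus in *; try change Defs.Copp with Copp in *;
  try change Defs.Cdiv with Cdiv in *; try change Defs.Cinv with Cinv in *;
  try change Cabs with Cmod in *; try change Defs.RtoC with RtoC in *;
  try change Defs.C0 with (RtoC 0) in *; try change Defs.C1 with (RtoC 1) in *;
  try change Defs.Re with (@fst R R) in *; try change Defs.Im with (@snd R R) in *;
  try change Cx with C in *; try change Cx with C.

Open Scope C_scope.

Lemma Csum_ext n f g : (forall i, (i < n)%nat -> f i = g i) -> Csum n f = Csum n g.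
Proof. induction n; simpl; intros H; auto. rewrite IHn by (intros; apply H; lia). rewrite H by lia. auto. Qed.

Lemma Csum_plus n (f g : nat -> C) : Csum n (fun i => f i + g i) = Csum n f + Csum n g.
Proof. induction n; simpl. toC. ring. toC. rewrite IHn. ring. Qed.

Lemma Csum_mull n (c : C) (f : nat -> C) : Csum n (fun i => c * f i) = c * Csum n f.
Proof. induction n; simpl; toC. ring. rewrite IHn. ring. Qed.

Lemma Csum_opp n (f : nat -> C) : Csum n (fun i => - f i) = - Csum n f.
Proof. induction n; simpl; toC. ring. rewrite IHn. ring. Qed.

Lemma Csum_zero n (f : nat -> C) : (forall i, (i < n)%nat -> f i = RtoC 0) -> Csum n f = RtoC 0.
Proof. induction n; simpl; toC; intros H. ring. rewrite IHn by (intros; apply H; lia). rewrite H by lia. ring. Qed.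

Lemma Csum_swap n m (f : nat -> nat -> C) :
  Csum n (fun i => Csum m (fun j => f i j)) = Csum m (fun j => Csum n (fun i => f i j)).
Proof.
induction n; simpl; toC.
- symmetry. apply Csum_zero. intros; simpl. reflexivity.
- rewrite IHn. rewrite <- Csum_plus. reflexivity.
Qed.

Lemma Cdelta_sym i j : Cdelta i j = Cdelta j i.
Proof. unfold Cdelta. rewrite PeanoNat.Nat.eqb_sym. auto. Qed.

Lemma Csum_delta n j (f : nat -> C) : (j < n)%nat -> Csum n (fun i => Cdelta i j * f i) = f j.
Proof.
induction n; intros Hj; simpl; toC. lia.
destruct (PeanoNat.Nat.eq_dec j n).
- subst. rewrite Csum_zero. unfold Cdelta. rewrite PeanoNat.Nat.eqb_refl. toC. ring.
  intros i Hi. unfold Cdelta. replace (Nat.eqb i n) with false. toC. ring.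
  symmetry. apply PeanoNat.Nat.eqb_neq. lia.
- rewrite IHn by lia. unfold Cdelta. replace (Nat.eqb n j) with false. toC. ring.
  symmetry. apply PeanoNat.Nat.eqb_neq. lia.
Qed.

Lemma Cconj_sum n f : Cconj (Csum n f) = Csum n (fun i => Cconj (f i)).
Proof. induction n; simpl; toC. unfold Cconj; simpl. apply injective_projections; simpl; lra.
rewrite Cplus_conj, IHn. reflexivity. Qed.

Lemma Re_sum n f : fst (Csum n f) = Rsum n (fun i => fst (f i)).
Proof. induction n; simpl; auto. toC. rewrite IHn. auto. Qed.
Lemma Im_sum n f : snd (Csum n f) = Rsum n (fun i => snd (f i)).
Proof. induction n; simpl; auto. toC. rewrite IHn. auto. Qed.

Open Scope R_scope.
Lemma Rsum_ext n f g : (forall i, (i < n)%nat -> f i = g i) -> Rsum n f = Rsum n g.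
Proof. induction n; simpl; intros H; auto. rewrite IHn by (intros; apply H; lia). rewrite H by lia. auto. Qed.
Lemma Rsum_plus n f g : Rsum n (fun i => f i + g i) = Rsum n f + Rsum n g.
Proof. induction n; simpl. lra. rewrite IHn. lra. Qed.
Lemma Rsum_mull n c f : Rsum n (fun i => c * f i) = c * Rsum n f.
Proof. induction n; simpl. lra. rewrite IHn. lra. Qed.
Lemma Rsum_opp n f : Rsum n (fun i => - f i) = - Rsum n f.
Proof. induction n; simpl. lra. rewrite IHn. lra. Qed.
Lemma Rsum_le n f g : (forall i, (i < n)%nat -> f i <= g i) -> Rsum n f <= Rsum n g.
Proof. induction n; simpl; intros H. lra. assert (f n <= g n) by (apply H; lia).
 assert (Rsum n f <= Rsum n g) by (apply IHn; intros; apply H; lia). lra. Qed.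
Lemma Rsum_zero n f : (forall i, (i < n)%nat -> f i = 0) -> Rsum n f = 0.
Proof. induction n; simpl; intros H. lra. rewrite IHn by (intros; apply H; lia). rewrite H by lia. lra. Qed.
Lemma Rsum_nonneg n f : (forall i, (i < n)%nat -> 0 <= f i) -> 0 <= Rsum n f.
Proof. intros H. rewrite <- (Rsum_zero n (fun _ => 0)) by auto. apply Rsum_le; auto. Qed.
Lemma Rsum_swap n m f :
  Rsum n (fun i => Rsum m (fun j => f i j)) = Rsum m (fun j => Rsum n (fun i => f i j)).
Proof.
induction n; simpl.
- symmetry. apply Rsum_zero. intros; simpl. reflexivity.
- rewrite IHn. rewrite <- Rsum_plus. reflexivity.
Qed.
Lemma Rsum_term n f j : (j < n)%nat -> (forall i, (i < n)%nat -> 0 <= f i) -> f j <= Rsum n f.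
Proof.
induction n; intros Hj H; simpl. lia.
assert (0 <= Rsum n f) by (apply Rsum_nonneg; intros; apply H; lia).
destruct (PeanoNat.Nat.eq_dec j n). subst. lra.
assert (f j <= Rsum n f) by (apply IHn; [lia| intros; apply H; lia]).
assert (0 <= f n) by (apply H; lia). lra.
Qed.

Lemma Cmod_sum n f : Cmod (Csum n f) <= Rsum n (fun i => Cmod (f i)).
Proof. induction n; simpl. toC. rewrite Cmod_0. lra.
 toC. eapply Rle_trans. apply Cmod_triangle. lra. Qed.

Close Scope C_scope.
Open Scope R_scope.

Lemma Cmod_ge_fst z : fst z <= Cmod z.
Proof. destruct z as [a b]. unfold Cmod; simpl. apply Rle_trans with (Rabs a). apply Rle_abs.
 rewrite <- sqrt_Rsqr_abs. apply sqrt_le_1_alt. unfold Rsqr. nra. Qed.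

Lemma alg (hh Vu Wu Wv Cc A B WL : C) :
  snd A = 0 -> snd B = 0 -> snd WL = 0 -> 0 <= fst A - fst B -> 0 <= fst WL ->
  0 <= fst hh -> hh <> RtoC 0 ->
  (hh * Vu = hh * A - hh * B + Cc)%C ->
  (hh * Wu = hh * Wv - hh * Cconj Cc + WL)%C ->
  fst Wv <= Cmod Wu + Cmod hh * Cmod Vu.
Proof.
destruct hh as [h1 h2], Vu as [v1 v2], Wu as [u1 u2], Wv as [w1 w2], Cc as [c1 c2],
  A as [a1 a2], B as [b1 b2], WL as [l1 l2]; simpl; intros HA HB HL Hab Hl Hh Hnz E1 E2.
subst a2 b2 l2.
unfold Cmult, Cplus, Cminus, Copp, Cconj in E1, E2; simpl in E1, E2.
injection E1 as E1a E1b. injection E2 as E2a E2b.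
assert (Hn : 0 < h1*h1 + h2*h2).
{ destruct (Req_dec h1 0); destruct (Req_dec h2 0); try nra. subst. exfalso; apply Hnz; reflexivity. }
assert (Key : (h1*h1+h2*h2) * w1 + (h1*h1+h2*h2)*h1*(a1-b1) + h1*l1 =
              (h1*h1+h2*h2) * (u1 + (h1*v1 - h2*v2))).
{ assert (Ec1 : c1 = h1*v1 - h2*v2 - h1*a1 + h1*b1) by lra.
  assert (T : h1*(h1*u1 - h2*u2) + h2*(h1*u2+h2*u1) =
    h1*(h1 * w1 - h2 * w2 + - (h1 * c1 - h2 * - c2) + l1) +
    h2*(h1 * w2 + h2 * w1 + - (h1 * - c2 + h2 * c1) + 0)).
  { rewrite <- E2a, <- E2b. ring. }
  rewrite Ec1 in T. lra. }
assert (Hu : u1 <= Cmod (u1,u2)) by apply (Cmod_ge_fst (u1,u2)).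
assert (Hv : h1*v1 - h2*v2 <= Cmod (h1,h2) * Cmod (v1,v2)).
{ rewrite <- Cmod_mult. apply (Cmod_ge_fst (Cmult (h1,h2) (v1,v2))). }
assert (w1 <= u1 + (h1*v1 - h2*v2)).
{ apply Rmult_le_reg_l with (h1*h1+h2*h2); auto.
  assert (0 <= (h1*h1+h2*h2)*h1*(a1-b1)) by (apply Rmult_le_pos; [apply Rmult_le_pos|]; lra).
  assert (0 <= h1*l1) by (apply Rmult_le_pos; lra). lra. }
lra.
Qed.

Close Scope C_scope.
Open Scope C_scope.

Definition ip n (a b : nat -> C) : C := Csum n (fun i => Cconj (a i) * b i).
Definition Lop n (L : nat -> nat -> R) (x : nat -> C) (i : nat) : C :=
  Csum n (fun j => RtoC (L i j) * x j).

Lemma ip_comb n a b b1 b2 b3 c1 c2 :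
  (forall i, (i < n)%nat -> b i = c1 * b1 i - c2 * b2 i + b3 i) ->
  ip n a b = c1 * ip n a b1 - c2 * ip n a b2 + ip n a b3.
Proof.
intros H. unfold ip.
rewrite (Csum_ext n _ (fun i => (c1 * (Cconj (a i) * b1 i) + - (c2 * (Cconj (a i) * b2 i))) + Cconj (a i) * b3 i)).
- rewrite !Csum_plus, Csum_opp, !Csum_mull. toC; ring.
- intros i Hi. rewrite H by auto. toC; ring.
Qed.

Lemma ip_scal n a b c : ip n a (fun i => c * b i) = c * ip n a b.
Proof. unfold ip. rewrite <- Csum_mull. apply Csum_ext. intros; toC; ring. Qed.

Lemma ip_double n a (f : nat -> nat -> C) :
  ip n a (fun i => Csum n (fun j => f i j)) = Csum n (fun i => Csum n (fun j => Cconj (a i) * f i j)).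
Proof. unfold ip. apply Csum_ext. intros. rewrite <- Csum_mull. reflexivity. Qed.

Section LL.
Variable n : nat.
Variable L : nat -> nat -> R.
Hypothesis Lsym : forall i j, (i < n)%nat -> (j < n)%nat -> L i j = L j i.

Lemma ip_sym w v : ip n w (Lop n L v) = Cconj (ip n v (Lop n L w)).
Proof.
unfold Lop. rewrite !ip_double, Cconj_sum.
rewrite (Csum_ext n (fun i => Cconj _) (fun i => Csum n (fun j => Cconj (w j) * RtoC (L j i) * v i))).
- rewrite Csum_swap. apply Csum_ext; intros i Hi. apply Csum_ext; intros j Hj. toC; ring.
- intros i Hi. rewrite Cconj_sum. apply Csum_ext; intros j Hj.
  rewrite Lsym by auto. rewrite !Cmult_conj, Cconj_conj.
  unfold Cconj, RtoC, Cmult; simpl. apply injective_projections; simpl; toC; ring.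
Qed.

Lemma ip_L_im z : snd (ip n z (Lop n L z)) = 0%R.
Proof.
unfold Lop. rewrite ip_double, Im_sum.
rewrite (Rsum_ext n _ (fun i => Rsum n (fun j => fst (z i) * L i j * snd (z j)) +
   - Rsum n (fun j => snd (z i) * L i j * fst (z j)))%R).
- rewrite Rsum_plus, Rsum_opp.
  rewrite (Rsum_swap n n (fun i j => (snd (z i) * L i j * fst (z j))%R)).
  rewrite (Rsum_ext n (fun j => Rsum n (fun i => (snd (z i) * L i j * fst (z j))%R))
      (fun j => Rsum n (fun i => fst (z j) * L j i * snd (z i)))%R). toC; ring.
  intros j Hj. apply Rsum_ext. intros i Hi. rewrite Lsym by auto. toC; ring.
- intros i Hi. rewrite Im_sum, <- Rsum_opp, <- Rsum_plus. apply Rsum_ext. intros j Hj.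
  destruct (z i), (z j); simpl. toC; ring.
Qed.

Lemma ip_L_re z : fst (ip n z (Lop n L z)) =
   (quad n L (fun i => fst (z i)) + quad n L (fun i => snd (z i)))%R.
Proof.
unfold Lop, quad. rewrite ip_double, Re_sum, <- Rsum_plus. apply Rsum_ext. intros i Hi.
rewrite Re_sum, <- Rsum_plus. apply Rsum_ext. intros j Hj. destruct (z i), (z j); simpl. toC; ring.
Qed.
End LL.

Lemma ip_self_im n z : snd (ip n z z) = 0%R.
Proof. unfold ip. rewrite Im_sum. apply Rsum_zero. intros. destruct (z i); simpl. toC; ring. Qed.
Lemma ip_self_re n z : fst (ip n z z) =
   (Rsum n (fun i => fst (z i) * fst (z i)) + Rsum n (fun i => snd (z i) * snd (z i)))%R.
Proof. unfold ip. rewrite Re_sum, <- Rsum_plus. apply Rsum_ext. intros. destruct (z i); simpl. toC; ring. Qed.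

Lemma Cmod2 z : (Cmod z ^ 2 = fst z * fst z + snd z * snd z)%R.
Proof. unfold Cmod. rewrite pow2_sqrt. simpl; ring. destruct z; simpl; nra. Qed.

Section KEY.
Variable n : nat.
Variable L : nat -> nat -> R.
Hypothesis HL : Lclass n L.
Variables (hh : C) (G q v : nat -> C) (eps Mg Mh : R).
Hypothesis H1 : forall j, (j < n)%nat -> hh * (1 + q j) = G j.
Hypothesis H2 : forall j, (j < n)%nat -> (eps <= fst (G j))%R.
Hypothesis H3 : forall j, (j < n)%nat -> (Cmod (G j) <= Mg)%R.
Hypothesis H4 : (Cmod hh <= Mh)%R.
Hypothesis H5 : (0 <= fst hh)%R.
Hypothesis H6 : hh <> RtoC 0.

Definition uu (i : nat) : C := Csum n (fun j => (Cdelta i j + RtoC (L i j) * q j) * v j).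

Lemma key : (eps * Rsum n (fun i => Cmod (v i) ^ 2) <=
   (Mg + Mh) * Rsum n (fun i => Cmod (v i) * Cmod (uu i)))%R.
Proof.
destruct HL as [Lsym [Lpos Lle]].
set (w := fun i => G i * v i).
assert (F1 : forall i, (i < n)%nat -> hh * uu i = hh * v i - hh * Lop n L v i + Lop n L w i).
{ intros i Hi. unfold uu, Lop. rewrite <- Csum_mull.
  rewrite (Csum_ext n _ (fun j => Cdelta j i * (hh * v j) + (- (hh * (RtoC (L i j) * v j)) + RtoC (L i j) * w j))).
  - rewrite Csum_plus, Csum_delta by auto. rewrite Csum_plus, Csum_opp, Csum_mull. toC; ring.
  - intros j Hj. unfold w. rewrite <- H1 by auto. rewrite Cdelta_sym. toC. toC; ring. }
assert (E1 : hh * ip n v uu = hh * ip n v v - hh * ip n v (Lop n L v) + ip n v (Lop n L w)).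
{ rewrite <- ip_scal. rewrite (ip_comb n v _ v (Lop n L v) (Lop n L w) hh hh); auto. }
assert (E2 : hh * ip n w uu = hh * ip n w v - hh * Cconj (ip n v (Lop n L w)) + ip n w (Lop n L w)).
{ rewrite <- ip_sym by auto. rewrite <- ip_scal. rewrite (ip_comb n w _ v (Lop n L v) (Lop n L w) hh hh); auto. }
assert (Halg := alg hh (ip n v uu) (ip n w uu) (ip n w v) (ip n v (Lop n L w)) (ip n v v)
   (ip n v (Lop n L v)) (ip n w (Lop n L w))
   (ip_self_im n v) (ip_L_im n L Lsym v) (ip_L_im n L Lsym w)).
assert (PA : (0 <= fst (ip n v v) - fst (ip n v (Lop n L v)))%R).
{ rewrite ip_self_re, ip_L_re by auto.
  pose proof (Lle (fun i => fst (v i))). pose proof (Lle (fun i => snd (v i))). simpl in *. lra. }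
assert (PW : (0 <= fst (ip n w (Lop n L w)))%R).
{ rewrite ip_L_re by auto. pose proof (Lpos (fun i => fst (w i))). pose proof (Lpos (fun i => snd (w i))). lra. }
specialize (Halg PA PW H5 H6 E1 E2).
assert (Hwv : (eps * Rsum n (fun i => Cmod (v i) ^ 2) <= fst (ip n w v))%R).
{ unfold ip. rewrite Re_sum, <- Rsum_mull. apply Rsum_le. intros i Hi. rewrite Cmod2.
  unfold w. specialize (H2 i Hi). destruct (G i) as [g1 g2], (v i) as [a b]; simpl in *.
  assert (0 <= a*a+b*b) by nra. nra. }
assert (Hwu : (Cmod (ip n w uu) <= Mg * Rsum n (fun i => Cmod (v i) * Cmod (uu i)))%R).
{ unfold ip. eapply Rle_trans. apply Cmod_sum. rewrite <- Rsum_mull. apply Rsum_le. intros i Hi.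
  unfold w. rewrite !Cmod_mult, Cmod_conj, Cmod_mult. specialize (H3 i Hi).
  assert (0 <= Cmod (v i) * Cmod (uu i))%R by (apply Rmult_le_pos; apply Cmod_ge_0). nra. }
assert (Hvu : (Cmod (ip n v uu) <= Rsum n (fun i => Cmod (v i) * Cmod (uu i)))%R).
{ unfold ip. eapply Rle_trans. apply Cmod_sum. apply Rsum_le. intros i Hi.
  rewrite !Cmod_mult, Cmod_conj. lra. }
assert (0 <= Rsum n (fun i => Cmod (v i) * Cmod (uu i)))%R.
{ apply Rsum_nonneg. intros. apply Rmult_le_pos; apply Cmod_ge_0. }
assert (Cmod hh * Cmod (ip n v uu) <= Mh * Rsum n (fun i => Cmod (v i) * Cmod (uu i)))%R.
{ apply Rmult_le_compat; auto using Cmod_ge_0. }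
lra.
Qed.
End KEY.

Close Scope C_scope.
Open Scope R_scope.

Lemma lt_min_l a x y : a < Rmin x y -> a < x.
Proof. intros; eapply Rlt_le_trans; [eauto|apply Rmin_l]. Qed.
Lemma lt_min_r a x y : a < Rmin x y -> a < y.
Proof. intros; eapply Rlt_le_trans; [eauto|apply Rmin_r]. Qed.

Lemma Cmod_rev a b : Cmod a - Cmod (b - a)%C <= Cmod b.
Proof. replace a with ((a - b) + b)%C at 1 by (toC; ring).
 pose proof (Cmod_triangle (a - b)%C b).
 replace (a - b)%C with (- (b - a))%C in * by (toC; ring). rewrite Cmod_opp in *. lra. Qed.

Definition lim0 (phi : C -> C) (l : C) : Prop :=
  forall eps, 0 < eps -> exists delta, 0 < delta /\
    forall k : C, 0 < Cmod k -> Cmod k < delta -> Cmod (phi k - l)%C < eps.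

Definition Dv (f : C -> C) (z l : C) : Prop :=
  lim0 (fun k => ((f (z + k) - f z) / k)%C) l.

Lemma analytic_iff f : analytic_RHP f <-> (forall z, RHP z -> exists l, Dv f z l).
Proof. split; intros H; exact H. Qed.

Lemma lim0_const c : lim0 (fun _ => c) c.
Proof. intros eps He. exists 1. split. lra. intros k _ _.
 replace (c - c)%C with (RtoC 0) by (toC; ring). rewrite Cmod_0. auto. Qed.

Lemma lim0_id : lim0 (fun k => k) (RtoC 0).
Proof. intros eps He. exists eps. split. auto. intros k _ Hk.
 replace (k - 0)%C with k by (toC; ring). auto. Qed.

Lemma lim0_ext phi psi l r : 0 < r -> (forall k, 0 < Cmod k -> Cmod k < r -> phi k = psi k) ->
  lim0 phi l -> lim0 psi l.
Proof. intros Hr He H eps Heps. destruct (H eps Heps) as [d [Hd Hk]].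
 exists (Rmin d r). split. apply Rmin_pos; auto. intros k H1 H2.
 rewrite <- He. apply Hk; auto. eapply lt_min_l; eauto.
 auto. eapply lt_min_r; eauto. Qed.

Lemma lim0_plus phi psi a b : lim0 phi a -> lim0 psi b -> lim0 (fun k => phi k + psi k)%C (a + b)%C.
Proof. intros H1 H2 eps He. destruct (H1 (eps/2)) as [d1 [Hd1 K1]]. lra.
 destruct (H2 (eps/2)) as [d2 [Hd2 K2]]. lra.
 exists (Rmin d1 d2). split. apply Rmin_pos; auto. intros k Hk Hk2.
 assert (A1 := K1 k Hk (lt_min_l _ _ _ Hk2)).
 assert (A2 := K2 k Hk (lt_min_r _ _ _ Hk2)).
 replace (phi k + psi k - (a + b))%C with ((phi k - a) + (psi k - b))%C by (toC; ring).
 eapply Rle_lt_trans. apply Cmod_triangle. lra. Qed.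

Lemma lim0_bound phi l : lim0 phi l -> exists r, 0 < r /\
  forall k, 0 < Cmod k -> Cmod k < r -> Cmod (phi k) <= Cmod l + 1.
Proof. intros H. destruct (H 1) as [d [Hd K]]. lra. exists d. split; auto.
 intros k H1 H2. specialize (K k H1 H2).
 replace (phi k) with ((phi k - l) + l)%C by (toC; ring).
 eapply Rle_trans. apply Cmod_triangle. lra. Qed.

Lemma lim0_small psi B r : 0 < r -> (forall k, 0 < Cmod k -> Cmod k < r -> Cmod (psi k) <= B * Cmod k) ->
  lim0 psi (RtoC 0).
Proof. intros Hr H eps He. exists (Rmin r (eps / (Rabs B + 1))). split.
 apply Rmin_pos; auto. apply Rdiv_lt_0_compat; auto. pose proof (Rabs_pos B); lra.
 intros k H1 H2. replace (psi k - 0)%C with (psi k) by (toC; ring).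
 assert (Hk1 : Cmod k < r) by (eapply lt_min_l; eauto).
 assert (Hk2 : Cmod k < eps / (Rabs B + 1)) by (eapply lt_min_r; eauto).
 specialize (H k H1 Hk1). pose proof (Rle_abs B). pose proof (Rabs_pos B).
 assert (Cmod k * (Rabs B + 1) < eps).
 { apply Rmult_lt_reg_r with (/ (Rabs B + 1)). apply Rinv_0_lt_compat; lra.
   rewrite Rmult_assoc, Rinv_r by lra. rewrite Rmult_1_r. auto. }
 nra. Qed.

Lemma lim0_mult phi psi a b : lim0 phi a -> lim0 psi b -> lim0 (fun k => phi k * psi k)%C (a * b)%C.
Proof. intros H1 H2 eps He.
 destruct (lim0_bound phi a H1) as [r [Hr Kr]].
 set (E := eps / (2 * (Cmod a + 1 + Cmod b + 1))).
 assert (HE : 0 < E). { unfold E. apply Rdiv_lt_0_compat; auto. pose proof (Cmod_ge_0 a); pose proof (Cmod_ge_0 b); lra. }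
 destruct (H1 E HE) as [d1 [Hd1 K1]]. destruct (H2 E HE) as [d2 [Hd2 K2]].
 exists (Rmin r (Rmin d1 d2)). split. repeat apply Rmin_pos; auto. intros k Hk Hk2.
 assert (T1 : Cmod k < r) by (eapply lt_min_l; eauto).
 assert (T2 : Cmod k < Rmin d1 d2) by (eapply lt_min_r; eauto).
 assert (A1 := K1 k Hk (lt_min_l _ _ _ T2)).
 assert (A2 := K2 k Hk (lt_min_r _ _ _ T2)).
 assert (A3 := Kr k Hk T1).
 replace (phi k * psi k - a * b)%C with (phi k * (psi k - b) + (phi k - a) * b)%C by (toC; ring).
 eapply Rle_lt_trans. apply Cmod_triangle. rewrite !Cmod_mult.
 pose proof (Cmod_ge_0 a); pose proof (Cmod_ge_0 b); pose proof (Cmod_ge_0 (phi k));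
 pose proof (Cmod_ge_0 (psi k - b)%C); pose proof (Cmod_ge_0 (phi k - a)%C).
 assert (Cmod (phi k) * Cmod (psi k - b)%C <= (Cmod a + 1) * E) by (apply Rmult_le_compat; lra).
 assert (Cmod (phi k - a)%C * Cmod b <= E * Cmod b) by (apply Rmult_le_compat; lra).
 assert (E * (2 * (Cmod a + 1 + Cmod b + 1)) = eps).
 { unfold E. field. lra. }
 nra. Qed.

Lemma lim0_inv phi l : lim0 phi l -> l <> RtoC 0 -> lim0 (fun k => / phi k)%C (/ l)%C.
Proof. intros H Hl eps He.
 assert (Hm : 0 < Cmod l) by (apply Cmod_gt_0; auto).
 set (E := Rmin (Cmod l / 2) (eps * Cmod l * Cmod l / 2)).
 assert (HE : 0 < E). { unfold E. apply Rmin_pos. lra. apply Rdiv_lt_0_compat; [|lra]. 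
   repeat apply Rmult_lt_0_compat; auto. }
 destruct (H E HE) as [d [Hd K]]. exists d. split; auto. intros k H1 H2.
 specialize (K k H1 H2).
 assert (K1 : Cmod (phi k - l)%C < Cmod l / 2) by (eapply lt_min_l; eauto).
 assert (K2 : Cmod (phi k - l)%C < eps * Cmod l * Cmod l / 2) by (eapply lt_min_r; eauto).
 assert (Hp : Cmod l / 2 <= Cmod (phi k)).
 { pose proof (Cmod_rev l (phi k)). lra. }
 assert (Hpk : phi k <> RtoC 0).
 { intros E0. rewrite E0, Cmod_0 in Hp. lra. }
 replace (/ phi k - / l)%C with ((l - phi k) / (phi k * l))%C by (toC; field; auto).
 unfold Cdiv. rewrite Cmod_mult, Cmod_inv, Cmod_mult.
 2:{ intros E0. apply (f_equal Cmod) in E0. rewrite Cmod_mult, Cmod_0 in E0. pose proof (Cmod_ge_0 l). nra. }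
 replace (l - phi k)%C with (- (phi k - l))%C by (toC; ring). rewrite Cmod_opp.
 apply Rmult_lt_reg_r with (Cmod (phi k) * Cmod l).
 apply Rmult_lt_0_compat; lra.
 rewrite Rmult_assoc, Rinv_l by (apply Rgt_not_eq; apply Rmult_lt_0_compat; lra).
 assert (Cmod l / 2 * Cmod l <= Cmod (phi k) * Cmod l) by (apply Rmult_le_compat_r; lra).
 nra.
Qed.

Lemma lim0_eq phi l l' : lim0 phi l -> l = l' -> lim0 phi l'.
Proof. intros H E; subst; auto. Qed.

Lemma Cmod_pos_neq k : 0 < Cmod k -> k <> RtoC 0.
Proof. intros H E. rewrite E, Cmod_0 in H. lra. Qed.

Lemma lim0_Csum n (phi : nat -> C -> C) (l : nat -> C) :
  (forall i, (i < n)%nat -> lim0 (phi i) (l i)) ->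
  lim0 (fun k => Csum n (fun i => phi i k)) (Csum n l).
Proof. induction n; intros H; simpl. apply lim0_const.
 apply (lim0_plus (fun k => Csum n (fun i => phi i k)) (phi n)). apply IHn; intros; apply H; lia. apply H; lia. Qed.

Lemma lim0_scal c phi l : lim0 phi l -> lim0 (fun k => c * phi k)%C (c * l)%C.
Proof. intros H. apply (lim0_mult (fun _ => c) phi). apply lim0_const. auto. Qed.

Lemma Dv_cont f z l : Dv f z l -> lim0 (fun k => f (z + k)%C) (f z).
Proof. intros H.
 apply lim0_ext with (phi := fun k => (f z + k * ((f (z + k) - f z) / k))%C) (r := 1). lra.
 intros k Hk _. toC. field. apply Cmod_pos_neq; auto.
 eapply lim0_eq. apply (lim0_plus (fun _ => f z)). apply lim0_const. apply (lim0_mult (fun k => k)). apply lim0_id. eauto. toC; ring. Qed.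

Lemma Dv_const c z : Dv (fun _ => c) z (RtoC 0).
Proof. unfold Dv. apply lim0_ext with (phi := fun _ => RtoC 0) (r := 1). lra.
 intros k Hk _. toC. field. apply Cmod_pos_neq; auto. apply lim0_const. Qed.

Lemma Dv_id z : Dv (fun s => s) z (RtoC 1).
Proof. unfold Dv. apply lim0_ext with (phi := fun _ => RtoC 1) (r := 1). lra.
 intros k Hk _. toC. field. apply Cmod_pos_neq; auto. apply lim0_const. Qed.

Lemma Dv_plus f g z a b : Dv f z a -> Dv g z b -> Dv (fun s => f s + g s)%C z (a + b)%C.
Proof. intros H1 H2. unfold Dv.
 apply lim0_ext with (phi := fun k => ((f (z + k) - f z) / k + (g (z + k) - g z) / k)%C) (r := 1). lra.
 intros k Hk _. toC. field. apply Cmod_pos_neq; auto. apply lim0_plus; auto. Qed.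

Lemma Dv_mult f g z a b : Dv f z a -> Dv g z b -> Dv (fun s => f s * g s)%C z (a * g z + f z * b)%C.
Proof. intros H1 H2. unfold Dv.
 apply lim0_ext with (phi := fun k => ((f (z + k) - f z) / k * g (z + k) + f z * ((g (z + k) - g z) / k))%C) (r := 1). lra.
 intros k Hk _. toC. field. apply Cmod_pos_neq; auto.
 apply lim0_plus. apply (lim0_mult _ (fun k => g (z + k)%C)). exact H1. exact (Dv_cont g z b H2).
 apply lim0_scal; exact H2. Qed.

Lemma Dv_Csum n (f : nat -> C -> C) z (l : nat -> C) :
  (forall i, (i < n)%nat -> Dv (f i) z (l i)) -> Dv (fun s => Csum n (fun i => f i s)) z (Csum n l).
Proof. induction n; intros H; simpl.
 apply Dv_const. apply (Dv_plus (fun s => Csum n (fun i => f i s)) (f n)). apply IHn; intros; apply H; lia. apply H; lia. Qed.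

Lemma Dv_inv z : z <> RtoC 0 -> Dv (fun s => / s)%C z (- (/ z * / z))%C.
Proof. intros Hz. unfold Dv.
 assert (Hm : 0 < Cmod z) by (apply Cmod_gt_0; auto).
 apply lim0_ext with (phi := fun k => ((- / (z + k)) * / z)%C) (r := Cmod z). auto.
 intros k Hk Hk2. assert (z + k <> RtoC 0)%C.
 { intros E. pose proof (Cmod_rev z (z + k)%C).
   replace (z + k - z)%C with k in H by (toC; ring). rewrite E, Cmod_0 in H. lra. }
 toC. field. repeat split; auto. apply Cmod_pos_neq; auto.
 replace (- (/ z * / z))%C with ((- / z) * / z)%C by (toC; ring).
 apply (lim0_mult (fun k => - / (z + k))%C (fun _ => / z)%C).
 2: apply lim0_const.
 replace (- / z)%C with (RtoC (-1) * / z)%C by (toC; ring).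
 apply (lim0_ext (fun k => RtoC (-1) * / (z + k))%C) with (r := 1). lra. intros; toC; ring.
 apply lim0_scal. apply (lim0_inv (fun k => z + k)%C); auto.
 eapply lim0_eq. apply (lim0_plus (fun _ => z)). apply lim0_const. apply lim0_id. toC; ring. Qed.

Lemma Dv_ext_RHP f g z l : RHP z -> (forall s, RHP s -> f s = g s) -> Dv f z l -> Dv g z l.
Proof. intros Hz Hfg H. unfold Dv. unfold RHP in *.
 apply lim0_ext with (phi := fun k => ((f (z + k) - f z) / k)%C) (r := fst z). auto.
 intros k Hk Hk2. rewrite !Hfg; auto. toC.
 assert (fst k >= - Cmod k). { pose proof (Cmod_ge_fst (- k)%C). simpl in H0. rewrite Cmod_opp in H0. lra. }
 simpl. lra. auto. Qed.

Close Scope C_scope.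
Open Scope R_scope.

Lemma An_const c : analytic_RHP (fun _ => c).
Proof. apply analytic_iff. intros. eexists. apply Dv_const. Qed.
Lemma An_id : analytic_RHP (fun s => s).
Proof. apply analytic_iff. intros. eexists. apply Dv_id. Qed.
Lemma An_plus f g : analytic_RHP f -> analytic_RHP g -> analytic_RHP (fun s => f s + g s)%C.
Proof. rewrite !analytic_iff. intros H1 H2 z Hz. destruct (H1 z Hz), (H2 z Hz). eexists. apply Dv_plus; eauto. Qed.
Lemma An_mult f g : analytic_RHP f -> analytic_RHP g -> analytic_RHP (fun s => f s * g s)%C.
Proof. rewrite !analytic_iff. intros H1 H2 z Hz. destruct (H1 z Hz), (H2 z Hz). eexists. apply Dv_mult; eauto. Qed.
Lemma An_Csum n (f : nat -> C -> C) : (forall i, (i < n)%nat -> analytic_RHP (f i)) ->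
  analytic_RHP (fun s => Csum n (fun i => f i s)).
Proof. induction n; intros H; simpl. apply An_const.
 apply (An_plus (fun s => Csum n (fun i => f i s)) (f n)). apply IHn; intros; apply H; lia. apply H; lia. Qed.
Lemma An_ext f g : analytic_RHP f -> (forall s, RHP s -> f s = g s) -> analytic_RHP g.
Proof. rewrite !analytic_iff. intros H1 He z Hz. destruct (H1 z Hz). eexists. eapply Dv_ext_RHP; eauto. Qed.
Lemma RHP_neq s : RHP s -> s <> RtoC 0.
Proof. unfold RHP. intros H E. rewrite E in H. simpl in H. lra. Qed.
Lemma An_inv : analytic_RHP (fun s => / s)%C.
Proof. apply analytic_iff. intros z Hz. eexists. apply Dv_inv. apply RHP_neq; auto. Qed.

Lemma Hinf_const c : Hinf (fun _ => c).
Proof. split. apply An_const. exists (Cabs c). intros; lra. Qed.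
Lemma Hinf_plus f g : Hinf f -> Hinf g -> Hinf (fun s => f s + g s)%C.
Proof. intros [A1 [M1 B1]] [A2 [M2 B2]]. split. apply An_plus; auto. exists (M1 + M2). intros s Hs.
 specialize (B1 s Hs); specialize (B2 s Hs). toC. eapply Rle_trans. apply Cmod_triangle. lra. Qed.
Lemma Hinf_mult f g : Hinf f -> Hinf g -> Hinf (fun s => f s * g s)%C.
Proof. intros [A1 [M1 B1]] [A2 [M2 B2]]. split. apply An_mult; auto. exists (Rmax M1 0 * Rmax M2 0). intros s Hs.
 specialize (B1 s Hs); specialize (B2 s Hs). toC. rewrite Cmod_mult.
 apply Rmult_le_compat; try apply Cmod_ge_0; eapply Rle_trans; eauto; apply Rmax_l. Qed.
Lemma Hinf_Csum n (f : nat -> C -> C) : (forall i, (i < n)%nat -> Hinf (f i)) ->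
  Hinf (fun s => Csum n (fun i => f i s)).
Proof. induction n; intros H; simpl. apply Hinf_const.
 apply (Hinf_plus (fun s => Csum n (fun i => f i s)) (f n)). apply IHn; intros; apply H; lia. apply H; lia. Qed.
Lemma Hinf_ext f g : Hinf f -> (forall s, RHP s -> f s = g s) -> Hinf g.
Proof. intros [A [M B]] He. split. eapply An_ext; eauto. exists M. intros s Hs. rewrite <- He; auto. Qed.

Close Scope C_scope.
Open Scope R_scope.

Lemma Csum_delta_r n j (f : nat -> C) : (j < n)%nat -> Csum n (fun i => f i * Cdelta i j)%C = f j.
Proof. intros Hj. rewrite <- (Csum_delta n j f) by auto. apply Csum_ext. intros. toC; ring. Qed.

Lemma Csum_mulr n (c : C) (f : nat -> C) : Csum n (fun i => f i * c)%C = (Csum n f * c)%C.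
Proof. rewrite (Csum_ext n _ (fun i => c * f i)%C). rewrite Csum_mull. toC; ring. intros; toC; ring. Qed.

Lemma resolvent n M1 X1 M0 X0 i j : is_inverse n M1 X1 -> is_inverse n M0 X0 ->
  (i < n)%nat -> (j < n)%nat ->
  (X1 i j - X0 i j)%C = Csum n (fun a => Csum n (fun b => X1 i a * (M0 a b - M1 a b) * X0 b j))%C.
Proof.
intros H1 H0 Hi Hj.
rewrite (Csum_ext n _ (fun a => Csum n (fun b => X1 i a * M0 a b * X0 b j) +
   - Csum n (fun b => X1 i a * M1 a b * X0 b j))%C).
2:{ intros a Ha. rewrite <- Csum_opp, <- Csum_plus. apply Csum_ext. intros. toC; ring. }
rewrite Csum_plus, Csum_opp.
rewrite (Csum_ext n (fun a => Csum n (fun b => X1 i a * M0 a b * X0 b j))%C (fun a => X1 i a * Cdelta a j)%C).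
2:{ intros a Ha. destruct (H0 a j Ha Hj) as [E _]. toC. rewrite <- E. rewrite <- Csum_mull.
    apply Csum_ext. intros. toC; ring. }
rewrite Csum_delta_r by auto.
rewrite Csum_swap.
rewrite (Csum_ext n (fun b => Csum n (fun a => X1 i a * M1 a b * X0 b j))%C (fun b => Cdelta b i * X0 b j)%C).
2:{ intros b Hb. destruct (H1 i b Hi Hb) as [_ E]. rewrite Cdelta_sym. toC. rewrite <- E.
    rewrite <- Csum_mulr. apply Csum_ext. intros. toC; ring. }
rewrite Csum_delta by auto. toC; ring.
Qed.

Definition bnd0 (phi : C -> C) : Prop :=
  exists r B, 0 < r /\ forall k, 0 < Cmod k -> Cmod k < r -> Cmod (phi k) <= B.

Lemma bnd0_of_lim0 phi l : lim0 phi l -> bnd0 phi.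
Proof. intros H. destruct (lim0_bound phi l H) as [r [Hr K]]. exists r, (Cmod l + 1). auto. Qed.

Lemma bnd0_plus f g : bnd0 f -> bnd0 g -> bnd0 (fun k => f k + g k)%C.
Proof. intros [r1 [B1 [H1 K1]]] [r2 [B2 [H2 K2]]]. exists (Rmin r1 r2), (B1 + B2). split.
 apply Rmin_pos; auto. intros k Hk Hk2. eapply Rle_trans. apply Cmod_triangle.
 pose proof (K1 k Hk (lt_min_l _ _ _ Hk2)). pose proof (K2 k Hk (lt_min_r _ _ _ Hk2)). lra. Qed.

Lemma bnd0_mult f g : bnd0 f -> bnd0 g -> bnd0 (fun k => f k * g k)%C.
Proof. intros [r1 [B1 [H1 K1]]] [r2 [B2 [H2 K2]]]. exists (Rmin r1 r2), (B1 * B2). split.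
 apply Rmin_pos; auto. intros k Hk Hk2. rewrite Cmod_mult.
 pose proof (K1 k Hk (lt_min_l _ _ _ Hk2)). pose proof (K2 k Hk (lt_min_r _ _ _ Hk2)).
 apply Rmult_le_compat; auto using Cmod_ge_0. Qed.

Lemma bnd0_const c : bnd0 (fun _ => c).
Proof. exists 1, (Cmod c). split. lra. intros; lra. Qed.

Lemma bnd0_Csum n (f : nat -> C -> C) : (forall i, (i < n)%nat -> bnd0 (f i)) ->
  bnd0 (fun k => Csum n (fun i => f i k)).
Proof. induction n; intros H; simpl. apply bnd0_const.
 apply (bnd0_plus (fun k => Csum n (fun i => f i k)) (f n)). apply IHn; intros; apply H; lia. apply H; lia. Qed.

Lemma lim0_Csum_ex n (phi : nat -> C -> C) :
  (forall i, (i < n)%nat -> exists l, lim0 (phi i) l) ->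
  exists l, lim0 (fun k => Csum n (fun i => phi i k)) l.
Proof. induction n; intros H; simpl. eexists; apply lim0_const.
 destruct IHn as [l1 H1]. intros; apply H; lia. destruct (H n) as [l2 H2]. lia.
 eexists. apply (lim0_plus (fun k => Csum n (fun i => phi i k)) (phi n)); eauto. Qed.

Lemma lim0_k_bnd S : bnd0 S -> lim0 (fun k => k * S k)%C (RtoC 0).
Proof. intros [r [B [Hr K]]]. apply lim0_small with (B := B) (r := r); auto.
 intros k Hk Hk2. rewrite Cmod_mult. specialize (K k Hk Hk2). pose proof (Cmod_ge_0 k). nra. Qed.

Lemma RHP_shift z k : RHP z -> Cmod k < fst z -> RHP (z + k)%C.
Proof. unfold RHP. intros Hz Hk. toC. simpl.
 pose proof (Cmod_ge_fst (- k)%C). rewrite Cmod_opp in H. simpl in H. lra. Qed.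

Section XAN.
Variable n : nat.
Variables (M X : C -> nat -> nat -> C) (K : R).
Hypothesis HMa : forall a b, (a < n)%nat -> (b < n)%nat -> analytic_RHP (fun s => M s a b).
Hypothesis HX : forall s, RHP s -> is_inverse n (M s) (X s).
Hypothesis HK : forall s, RHP s -> forall i j, (i < n)%nat -> (j < n)%nat -> Cmod (X s i j) <= K.

Lemma X_analytic i j : (i < n)%nat -> (j < n)%nat -> analytic_RHP (fun s => X s i j).
Proof.
intros Hi Hj. apply analytic_iff. intros z Hz.
assert (Hr : 0 < fst z) by exact Hz.
set (sM := fun a b k => ((M (z + k) a b - M z a b) / k)%C).
assert (HsM : forall a b, (a < n)%nat -> (b < n)%nat -> exists l, lim0 (sM a b) l).
{ intros a b Ha Hb. destruct (proj1 (analytic_iff _) (HMa a b Ha Hb) z Hz) as [l Hl]. exists l. exact Hl. }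
assert (Sid : forall i' j', (i' < n)%nat -> (j' < n)%nat -> forall k, 0 < Cmod k -> Cmod k < fst z ->
   ((X (z + k) i' j' - X z i' j') / k)%C =
   Csum n (fun a => Csum n (fun b => X (z + k) i' a * (- sM a b k) * X z b j'))%C).
{ intros i' j' Hi' Hj' k Hk Hk2. rewrite (resolvent n (M (z + k)%C) (X (z + k)%C) (M z) (X z)); auto.
  2: apply HX; apply RHP_shift; auto.
  unfold Cdiv. rewrite <- Csum_mulr. apply Csum_ext. intros a Ha. rewrite <- Csum_mulr.
  apply Csum_ext. intros b Hb. unfold sM. toC. field. apply Cmod_pos_neq; auto. }
assert (Cont : forall i' a, (i' < n)%nat -> (a < n)%nat -> lim0 (fun k => X (z + k) i' a)%C (X z i' a)).
{ intros i' a Hi' Ha.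
  set (S := fun k => Csum n (fun c => Csum n (fun b => X (z + k) i' c * (- sM c b k) * X z b a))%C).
  assert (BS : bnd0 S).
  { unfold S. apply bnd0_Csum. intros c Hc. apply bnd0_Csum. intros b Hb.
    apply bnd0_mult; [apply bnd0_mult|].
    - exists (fst z), K. split; auto. intros k Hk Hk2. apply HK; auto. apply RHP_shift; auto.
    - destruct (HsM c b Hc Hb) as [l Hl]. apply bnd0_of_lim0 with (l := (RtoC (-1) * l)%C).
      apply (lim0_ext (fun k => RtoC (-1) * sM c b k)%C) with (r := 1). lra. intros; toC; ring.
      apply lim0_scal. exact Hl.
    - apply bnd0_const. }
  apply lim0_ext with (phi := fun k => (X z i' a + k * S k)%C) (r := fst z); auto.
  - intros k Hk Hk2. unfold S. rewrite <- (Sid i' a) by auto. toC. field. apply Cmod_pos_neq; auto.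
  - eapply lim0_eq. apply (lim0_plus (fun _ => X z i' a)). apply lim0_const. apply lim0_k_bnd; auto.
    toC; ring. }
destruct (lim0_Csum_ex n (fun a k => Csum n (fun b => X (z + k) i a * (- sM a b k) * X z b j))%C) as [l Hl].
{ intros a Ha. apply lim0_Csum_ex. intros b Hb. destruct (HsM a b Ha Hb) as [m Hm].
  eexists. apply (lim0_mult (fun k => X (z + k) i a * - sM a b k)%C (fun _ => X z b j)).
  2: apply lim0_const. apply (lim0_mult (fun k => X (z + k) i a)%C (fun k => - sM a b k)%C).
  apply Cont; auto. eapply lim0_eq. 
  apply (lim0_ext (fun k => RtoC (-1) * sM a b k)%C) with (r := 1). lra. intros; toC; ring.
  apply lim0_scal. eauto. reflexivity. }
exists l. unfold Dv. apply lim0_ext with (r := fst z) (phi := fun k => Csum n (fun a => Csum n (fun b => X (z + k) i a * (- sM a b k) * X z b j))%C); auto.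
intros k Hk Hk2. rewrite Sid; auto.
Qed.
End XAN.

Close Scope C_scope.
Open Scope R_scope.

Lemma fin_min n (P : nat -> R -> Prop) :
  (forall i, (i < n)%nat -> exists e, 0 < e /\ P i e) ->
  (forall i e e', P i e -> 0 < e' -> e' <= e -> P i e') ->
  exists e, 0 < e /\ forall i, (i < n)%nat -> P i e.
Proof. intros H Hm. induction n.
 - exists 1. split. lra. intros; lia.
 - destruct IHn as [e1 [He1 K1]]. intros; apply H; lia.
   destruct (H n) as [e2 [He2 K2]]. lia.
   exists (Rmin e1 e2). split. apply Rmin_pos; auto. intros i Hi.
   destruct (PeanoNat.Nat.eq_dec i n). subst. eapply Hm; eauto. apply Rmin_pos; auto. apply Rmin_r.
   eapply Hm. apply K1. lia. apply Rmin_pos; auto. apply Rmin_l. Qed.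

Lemma fin_max n (P : nat -> R -> Prop) :
  (forall i, (i < n)%nat -> exists M, P i M) ->
  (forall i M M', P i M -> M <= M' -> P i M') ->
  exists M, 0 <= M /\ forall i, (i < n)%nat -> P i M.
Proof. intros H Hm. induction n.
 - exists 0. split. lra. intros; lia.
 - destruct IHn as [e1 [He1 K1]]. intros; apply H; lia.
   destruct (H n) as [e2 K2]. lia.
   exists (Rmax e1 e2). split. eapply Rle_trans; eauto; apply Rmax_l. intros i Hi.
   destruct (PeanoNat.Nat.eq_dec i n). subst. eapply Hm; eauto. apply Rmax_r.
   eapply Hm. apply K1. lia. apply Rmax_l. Qed.

Lemma Rsum_delta_mod n j (f : nat -> R) : (j < n)%nat ->
  Rsum n (fun i => f i * Cmod (Cdelta i j)) = f j.
Proof.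
induction n; intros Hj; simpl. lia.
destruct (PeanoNat.Nat.eq_dec j n).
- subst. rewrite Rsum_zero. unfold Cdelta. rewrite PeanoNat.Nat.eqb_refl. toC. rewrite Cmod_1. ring.
  intros i Hi. unfold Cdelta. replace (Nat.eqb i n) with false. toC. rewrite Cmod_0. ring.
  symmetry. apply PeanoNat.Nat.eqb_neq. lia.
- rewrite IHn by lia. unfold Cdelta. replace (Nat.eqb n j) with false. toC. rewrite Cmod_0. ring.
  symmetry. apply PeanoNat.Nat.eqb_neq. lia.
Qed.

Lemma Cmod_delta_le i j : Cmod (Cdelta i j) <= 1.
Proof. unfold Cdelta. destruct (Nat.eqb i j); toC. rewrite Cmod_1; lra. rewrite Cmod_0; lra. Qed.

Lemma sq_le x c : 0 <= x -> 0 <= c -> x * x <= c * c -> x <= c.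
Proof. intros. nra. Qed.

Theorem theorem1 :
  forall (n : nat), (1 <= n)%nat ->
  forall h : Cx -> Cx, PR h -> A0 h ->
  forall p : nat -> Cx -> Cx, (forall i, (i < n)%nat -> Pclass h (p i)) ->
  forall L : nat -> nat -> R, Lclass n L ->
  stable n p L.
Proof.
intros n Hn h Hh HA p Hp L HL.
destruct n as [|n']; [lia|].
set (N := S n') in *.
set (g := fun i s => Cmul (h s) (Cadd Defs.C1 (Cdiv (p i s) s))).
destruct (fin_min N (fun i e => forall s, RHP s -> e <= fst (g i s))) as [eps [Heps Keps]].
{ intros i Hi. destruct (Hp i Hi) as [_ [_ [_ [_ [e [He [_ [_ Hre]]]]]]]].
  exists e. split; auto. intros s Hs. specialize (Hre s Hs).
  change (0 <= fst (g i s) + - e) in Hre. lra. }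
{ intros i e e' H1 H2 H3 s Hs. specialize (H1 s Hs). lra. }
destruct (fin_max N (fun i M => forall s, RHP s -> Cmod (g i s) <= M)) as [Mg [HMg0 KMg]].
{ intros i Hi. destruct (Hp i Hi) as [_ [_ [_ [[[_ [M HM]] _] _]]]]. exists M. exact HM. }
{ intros i M M' H1 H2 s Hs. specialize (H1 s Hs). lra. }
destruct HA as [[_ [Mh0 HMh0]] _].
set (Mh := Rmax Mh0 0).
assert (HMh : forall s, RHP s -> Cmod (h s) <= Mh).
{ intros s Hs. eapply Rle_trans. apply (HMh0 s Hs). apply Rmax_l. }
assert (HMh1 : 0 <= Mh) by apply Rmax_r.
destruct Hh as [_ [_ Hreh]].
assert (Hnz : forall s, RHP s -> h s <> RtoC 0).
{ intros s Hs E. assert (T := Keps 0%nat ltac:(unfold N; lia) s Hs). unfold g in T.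
  rewrite E in T. simpl in T. lra. }
assert (KeyS : forall s, RHP s -> forall v : nat -> C,
   eps * Rsum N (fun i => Cmod (v i) ^ 2) <=
   (Mg + Mh) * Rsum N (fun i => Cmod (v i) * Cmod (Csum N (fun j => Cmul (loopM N p L s i j) (v j))))).
{ intros s Hs v.
  assert (T := key N L HL (h s) (fun j => g j s) (fun j => (p j s / s)%C) v eps Mg Mh
     (fun j _ => eq_refl) (fun j Hj => Keps j Hj s Hs) (fun j Hj => KMg j Hj s Hs) (HMh s Hs)
     (Hreh s Hs) (Hnz s Hs)).
  eapply Rle_trans. apply T. right. f_equal. apply Rsum_ext. intros i Hi. f_equal. f_equal.
  unfold uu. apply Csum_ext. intros j Hj. unfold loopM. toC. unfold Cdiv. ring. }
assert (Hex : forall s, exists X, RHP s -> is_inverse N (loopM N p L s) X).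
{ intros s. destruct (Rlt_dec 0 (fst s)) as [Hs|Hs].
  - destruct (LA.inv_exists n' (loopM N p L s)) as [X HX].
    + intros v Hv i Hi. specialize (KeyS s Hs v).
      rewrite (Rsum_zero N (fun i => Cmod (v i) * Cmod (Csum N (fun j => Cmul (loopM N p L s i j) (v j))))) in KeyS.
      2:{ intros i' Hi'. rewrite Hv by auto. toC. rewrite Cmod_0. ring. }
      assert (T : Cmod (v i) ^ 2 <= Rsum N (fun i => Cmod (v i) ^ 2)).
      { apply (Rsum_term N (fun i => Cmod (v i) ^ 2)); auto. intros; apply pow2_ge_0. }
      assert (T2 : Cmod (v i) ^ 2 <= 0) by nra.
      assert (T3 : Cmod (v i) = 0). { pose proof (Cmod_ge_0 (v i)). nra. }
      apply Cmod_eq_0 in T3. exact T3.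
    + exists X. intros _. exact HX.
  - exists (fun _ _ => Defs.C0). intros H. exfalso. apply Hs. exact H. }
set (Xinv := fun s => proj1_sig (constructive_indefinite_description _ (Hex s))).
assert (HX : forall s, RHP s -> is_inverse N (loopM N p L s) (Xinv s)).
{ intros s Hs. exact (proj2_sig (constructive_indefinite_description _ (Hex s)) Hs). }
set (K := (Mg + Mh) / eps).
assert (HK0 : 0 <= K). { unfold K. apply Rmult_le_pos. lra. left; apply Rinv_0_lt_compat; auto. }
assert (HK : forall s, RHP s -> forall i j, (i < N)%nat -> (j < N)%nat -> Cmod (Xinv s i j) <= K).
{ intros s Hs i j Hi Hj. set (v := fun k => Xinv s k j).
  assert (T := KeyS s Hs v).
  rewrite (Rsum_ext N (fun i => Cmod (v i) * Cmod (Csum N (fun j' => Cmul (loopM N p L s i j') (v j')))) (fun i => Cmod (v i) * Cmod (Cdelta i j))) in T.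
  2:{ intros i' Hi'. unfold v. rewrite (proj1 (HX s Hs i' j Hi' Hj)). reflexivity. }
  rewrite Rsum_delta_mod in T by auto.
  set (S := Rsum N (fun i => Cmod (v i) ^ 2)) in T.
  assert (Ti : Cmod (v i) ^ 2 <= S).
  { apply (Rsum_term N (fun i => Cmod (v i) ^ 2)); auto. intros; apply pow2_ge_0. }
  assert (Tj : Cmod (v j) ^ 2 <= S).
  { apply (Rsum_term N (fun i => Cmod (v i) ^ 2)); auto. intros; apply pow2_ge_0. }
  assert (EK : Mg + Mh = K * eps). { unfold K. field. lra. }
  rewrite EK in T.
  assert (Aj : Cmod (v j) <= K).
  { destruct (Req_dec (Cmod (v j)) 0) as [E|E]. rewrite E; auto.
    pose proof (Cmod_ge_0 (v j)).
    assert (eps * (Cmod (v j) * Cmod (v j)) <= eps * (K * Cmod (v j))).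
    { assert (eps * Cmod (v j) ^ 2 <= eps * S) by (apply Rmult_le_compat_l; lra). simpl in *. nra. }
    apply Rmult_le_reg_l in H0; auto. apply Rmult_le_reg_r with (Cmod (v j)). lra. lra. }
  apply sq_le. apply Cmod_ge_0. auto.
  assert (eps * S <= eps * (K * K)).
  { assert (K * eps * Cmod (v j) <= K * eps * K).
    { apply Rmult_le_compat_l; auto. apply Rmult_le_pos; lra. }
    lra. }
  apply Rmult_le_reg_l in H; auto. simpl in Ti. unfold v in Ti. lra. }
assert (HMa : forall a b, (a < N)%nat -> (b < N)%nat -> analytic_RHP (fun s => loopM N p L s a b)).
{ intros a b Ha Hb. apply (An_ext (fun s => (Cdelta a b + (RtoC (L a b) * p b s) * / s)%C)).
  2: intros; reflexivity.
  apply An_plus. apply An_const. apply An_mult. apply An_mult. apply An_const.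
  destruct (Hp b Hb) as [[Ha' _] _]. exact Ha'. apply An_inv. }
assert (Xan := X_analytic N (loopM N p L) Xinv K HMa HX HK).
assert (Xh : forall k l, (k < N)%nat -> (l < N)%nat -> Hinf (fun s => Xinv s k l)).
{ intros k l Hk Hl. split. apply Xan; auto. exists K. intros s Hs. apply HK; auto. }
exists Xinv. split. exact HX.
intros i j Hi Hj.
apply Hinf_ext with (f := fun s => Csum N (fun k => leftB N p s i k * Csum N (fun l => Xinv s k l * rightB N L s l j))%C).
2:{ intros s _. unfold closed_loop. apply Csum_ext; intros k Hk. rewrite <- Csum_mull.
    apply Csum_ext; intros; toC; ring. }
apply Hinf_Csum; intros k Hk.
apply (Hinf_mult (fun s => leftB N p s i k) (fun s => Csum N (fun l => Xinv s k l * rightB N L s l j)%C)).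
{ unfold leftB. destruct (Nat.ltb i N) eqn:E.
  - apply (Hinf_mult (fun _ => Cdelta i k) (p i)). apply Hinf_const.
    apply PeanoNat.Nat.ltb_lt in E. destruct (Hp i E) as [Hpi _]. exact Hpi.
  - apply Hinf_const. }
unfold rightB. destruct (Nat.ltb j N) eqn:Ej.
2:{ apply Hinf_Csum; intros l Hl. apply (Hinf_mult (fun s => Xinv s k l) (fun _ => Cdelta l (j - N))).
    apply Xh; auto. apply Hinf_const. }
apply PeanoNat.Nat.ltb_lt in Ej.
split.
{ apply An_Csum. intros l Hl. apply An_mult. apply Xan; auto.
  apply (An_mult (fun _ => RtoC (L l j)) (fun s => / s)%C). apply An_const. apply An_inv. }
destruct (Hp j Ej) as [[_ [Mp HMp]] [[c [Hc Hlim]] _]].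
assert (Hcm : 0 < Cmod c). { apply Cmod_gt_0. exact Hc. }
destruct (Hlim (Cmod c / 2)) as [d [Hd Kd]]. lra.
exists (Rmax (2 * (1 + K) / Cmod c) (K * Rsum N (fun l => Rabs (L l j)) / d)).
intros s Hs. toC.
set (Y := Csum N (fun l => Xinv s k l * Cdiv (RtoC (L l j)) s)%C).
destruct (Rlt_le_dec (Cmod s) d) as [Hsd|Hsd].
- eapply Rle_trans. 2: apply Rmax_l.
  assert (Hpc : Cmod (p j s - c)%C < Cmod c / 2).
  { apply Kd; auto. toC. replace (s - RtoC 0)%C with s by (toC; ring). auto. }
  assert (Hpm : Cmod c / 2 <= Cmod (p j s)).
  { pose proof (Cmod_rev c (p j s)). lra. }
  assert (E : (p j s * Y)%C = (Cdelta k j - Xinv s k j)%C).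
  { destruct (HX s Hs k j Hk Ej) as [_ E2].
    assert (E3 : Csum N (fun l => Cmul (Xinv s k l) (loopM N p L s l j)) =
       (Csum N (fun l => Xinv s k l * Cdelta l j) + Csum N (fun l => p j s * (Xinv s k l * Cdiv (RtoC (L l j)) s)))%C).
    { rewrite <- Csum_plus. apply Csum_ext. intros l Hl. unfold loopM. toC. unfold Cdiv. ring. }
    rewrite E2, Csum_delta_r, Csum_mull in E3 by auto. unfold Y. toC. rewrite E3. ring. }
  assert (Hm : Cmod (p j s) * Cmod Y <= 1 + K).
  { rewrite <- Cmod_mult, E. eapply Rle_trans. apply Cmod_triangle. rewrite Cmod_opp.
    pose proof (Cmod_delta_le k j). pose proof (HK s Hs k j Hk Ej). lra. }
  assert (Cmod c / 2 * Cmod Y <= 1 + K).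
  { eapply Rle_trans; [|exact Hm]. apply Rmult_le_compat_r. apply Cmod_ge_0. auto. }
  apply Rmult_le_reg_l with (Cmod c / 2). lra.
  replace (Cmod c / 2 * (2 * (1 + K) / Cmod c)) with (1 + K) by (field; lra). auto.
- eapply Rle_trans. 2: apply Rmax_r.
  assert (Hs0 : s <> RtoC 0) by (apply RHP_neq; auto).
  assert (Hsm : 0 < Cmod s) by (apply Cmod_gt_0; auto).
  unfold Y. eapply Rle_trans. apply Cmod_sum.
  replace (K * Rsum N (fun l => Rabs (L l j)) / d) with (Rsum N (fun l => (K / d) * Rabs (L l j))).
  2:{ rewrite Rsum_mull. field. lra. }
  apply Rsum_le. intros l Hl. toC. rewrite Cmod_mult, Cmod_div, Cmod_R by auto.
  pose proof (HK s Hs k l Hk Hl). pose proof (Rabs_pos (L l j)).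
  assert (Rabs (L l j) / Cmod s <= Rabs (L l j) / d).
  { unfold Rdiv. apply Rmult_le_compat_l; auto. apply Rinv_le_contravar; auto. }
  assert (0 <= Rabs (L l j) / Cmod s). { unfold Rdiv. apply Rmult_le_pos; auto. left; apply Rinv_0_lt_compat; auto. }
  replace (K / d * Rabs (L l j)) with (K * (Rabs (L l j) / d)) by (field; lra).
  apply Rmult_le_compat; auto using Cmod_ge_0.
Qed.
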